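(* Let $(M,g)$ be an $n$-dimensional pseudo-Riemannian manifold, $T$ a Killing tensor (respectively, a traceless conformal tensor), and $E_\rho$ a regular eigenspace of $T$ with eigenvalue function $\rho$. Then $(T-\rho g)\{x,y\}=g(x,y)(\mathrm d\rho-t)$ for every $x,y\in E_\rho$, with $t=0$ (respectively, $t=\frac{2}{n+2}\nabla\cdot T$). Moreover $\mathrm d\rho\in E_\rho^{\perp}$ (respectively, $2\nabla\cdot T-(n+2)\mathrm d\rho\in E_\rho^{\perp}$).
   Context: $\nabla$ is the Levi-Civita connection; vectors and 1-forms are identified via $g$; $T$ is viewed both as a bilinear form and as an endomorphism. $\{x,y\}=\nabla_xy+\nabla_yx$; $(\nabla\cdot T)_b=\nabla^aT_{ab}$. An eigenspace $E_\rho=\{x:T(x)=\rho x\}$ is regular if it is a distribution of constant rank on which $g$ is nondegenerate (equivalently, it admits a basis of non-null vectors). Killing tensor: symmetric $K$ with $\nabla_{(a}K_{bc)}=0$. Conformal tensor: traceless symmetric $T$ with $\nabla_{(a}T_{bc)}=g_{(ab}t_{c)}$ for some 1-form $t$. *)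

(* Defs.v *)
(* Local coordinate model of a
   pseudo-Riemannian manifold: an open set U of R^n (row vectors) with a
   symmetric invertible smooth metric matrix field G. *)
From HB Require Import structures.
From mathcomp Require Import all_boot all_order all_algebra.
From mathcomp Require Import all_classical all_reals all_analysis.
Set Implicit Arguments. Unset Strict Implicit. Unset Printing Implicit Defensive.
Import Order.TTheory GRing.Theory Num.Theory.
Import numFieldNormedType.Exports.
Local Open Scope classical_set_scope.
Local Open Scope ring_scope.

Section Geo.
Variables (R : realType) (n : nat).
Local Notation V := 'rV[R]_n.

Definition ecoord (i : 'I_n) : V := delta_mx 0 i.
Definition partial (i : 'I_n) (f : V -> R) : V -> R := fun p => derive f p (ecoord i).

Fixpoint Ck (k : nat) (U : set V) (f : V -> R) : Prop :=
  match k with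
  | 0 => forall p, U p -> {for p, continuous f}
  | k'.+1 => (forall i p, U p -> derivable f p (ecoord i)) /\
             (forall i, Ck k' U (partial i f))
  end.
Definition smooth_on (U : set V) (f : V -> R) : Prop := forall k, Ck k U f.

Definition smooth_mx_on (U : set V) (A : V -> 'M[R]_n) : Prop :=
  forall i j, smooth_on U (fun p => A p i j).
Definition smooth_vf_on (U : set V) (x : V -> 'rV[R]_n) : Prop :=
  forall i, smooth_on U (fun p => x p 0 i).

Definition metric_on (U : set V) (G : V -> 'M[R]_n) : Prop :=
  smooth_mx_on U G /\ forall p, U p -> (G p)^T = G p /\ G p \in unitmx.

Definition ginv (G : V -> 'M[R]_n) (p : V) : 'M[R]_n := invmx (G p).

Definition christoffel (G : V -> 'M[R]_n) (k i j : 'I_n) (p : V) : R :=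
  2^-1 * \sum_(l < n) ginv G p k l *
    (partial i (fun q => G q j l) p + partial j (fun q => G q i l) p
     - partial l (fun q => G q i j) p).

Definition nablaT (G T : V -> 'M[R]_n) (a b c : 'I_n) (p : V) : R :=
  partial a (fun q => T q b c) p
  - \sum_(k < n) christoffel G k a b p * T p k c
  - \sum_(k < n) christoffel G k a c p * T p b k.

Definition nablaV (G : V -> 'M[R]_n) (x y : V -> 'rV[R]_n) (p : V) : 'rV[R]_n :=
  \row_k (\sum_(i < n) x p 0 i * partial i (fun q => y q 0 k) p
          + \sum_(i < n) \sum_(j < n) christoffel G k i j p * x p 0 i * y p 0 j).

Definition symbr (G : V -> 'M[R]_n) (x y : V -> 'rV[R]_n) (p : V) : 'rV[R]_n :=
  nablaV G x y p + nablaV G y x p.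

(* full symmetrization (times 6) of a 3-index quantity *)
Definition sym3 (F : 'I_n -> 'I_n -> 'I_n -> R) (a b c : 'I_n) : R :=
  F a b c + F a c b + F b a c + F b c a + F c a b + F c b a.

Definition symmetric_field_on (U : set V) (T : V -> 'M[R]_n) : Prop :=
  smooth_mx_on U T /\ forall p, U p -> (T p)^T = T p.

Definition killing_on (U : set V) (G T : V -> 'M[R]_n) : Prop :=
  symmetric_field_on U T /\
  forall p, U p -> forall a b c, sym3 (fun a b c => nablaT G T a b c p) a b c = 0.

Definition gtrace (G T : V -> 'M[R]_n) (p : V) : R :=
  \sum_(a < n) \sum_(b < n) ginv G p a b * T p a b.

Definition conformal_on (U : set V) (G T : V -> 'M[R]_n) : Prop :=
  symmetric_field_on U T /\ (forall p, U p -> gtrace G T p = 0) /\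
  exists t : 'I_n -> V -> R, forall p, U p -> forall a b c,
    sym3 (fun a b c => nablaT G T a b c p) a b c =
    sym3 (fun a b c => G p a b * t c p) a b c.

Definition divT (G T : V -> 'M[R]_n) (b : 'I_n) (p : V) : R :=
  \sum_(a < n) \sum_(c < n) ginv G p a c * nablaT G T c a b p.

(* T as an endomorphism (acting on row vectors x |-> x *m endo):
   (T x)^a = g^{ac} T_{cb} x^b *)
Definition endo (G T : V -> 'M[R]_n) (p : V) : 'M[R]_n := T p *m ginv G p.

Definition Espace (G T : V -> 'M[R]_n) (rho : V -> R) (p : V) : 'M[R]_n :=
  eigenspace (endo G T p) (rho p).

Definition in_eig (G T : V -> 'M[R]_n) (rho : V -> R) (p : V) (v : 'rV[R]_n) : bool :=
  (v <= Espace G T rho p)%MS.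

Definition gform (G : V -> 'M[R]_n) (p : V) (x y : 'rV[R]_n) : R :=
  \sum_(a < n) \sum_(b < n) G p a b * x 0 a * y 0 b.

Definition regular_eigenspace_on (U : set V) (G T : V -> 'M[R]_n) (rho : V -> R)
  : Prop :=
  (exists r : nat, forall p, U p -> \rank (Espace G T rho p) = r) /\
  (forall p, U p -> forall v, in_eig G T rho p v ->
     (forall w, in_eig G T rho p w -> gform G p v w = 0) -> v = 0).

End Geo.

(* Main.v *)
Require Import Defs.
From HB Require Import structures.
From mathcomp Require Import all_boot all_order all_algebra.
From mathcomp Require Import all_classical all_reals all_analysis.
From mathcomp Require Import perm ring lra.
Import Order.TTheory GRing.Theory Num.Theory.
Import numFieldNormedType.Exports.
Set Implicit Arguments. Unset Strict Implicit. Unset Printing Implicit Defensive.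
Local Open Scope classical_set_scope.
Local Open Scope ring_scope.

Section P1.
Variables (R : realType) (V : normedModType R).

Lemma derivable_bigsum (I : Type) (r : seq I) (P : pred I) (F : I -> V -> R^o) p v :
  (forall i, P i -> derivable (F i) p v) ->
  derivable (fun q => \sum_(i <- r | P i) F i q) p v.
Proof.
move=> dF; elim: r => [|i r IH].
  under [X in derivable X]funext do rewrite big_nil.
  exact: derivable_cst.
under [X in derivable X]funext do rewrite big_cons.
case: (boolP (P i)) => Pi; last exact: IH.
exact: (derivableD (dF i Pi) IH).
Qed.

Lemma derivable_bigprod (I : Type) (r : seq I) (P : pred I) (F : I -> V -> R^o) p v :
  (forall i, P i -> derivable (F i) p v) ->
  derivable (fun q => \prod_(i <- r | P i) F i q) p v.
Proof.
move=> dF; elim: r => [|i r IH].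
  under [X in derivable X]funext do rewrite big_nil.
  exact: derivable_cst.
under [X in derivable X]funext do rewrite big_cons.
case: (boolP (P i)) => Pi; last exact: IH.
exact: (derivableM (dF i Pi) IH).
Qed.

Lemma derivable_det m (M : V -> 'M[R]_m) p v :
  (forall i j, derivable (fun q => M q i j : R^o) p v) ->
  derivable (fun q => \det (M q) : R^o) p v.
Proof.
move=> dM; rewrite /determinant.
apply: derivable_bigsum => s _.
have H := @derivable_bigprod 'I_m (index_enum 'I_m) predT (fun i q => M q i (s i) : R^o) p v (fun i _ => dM i (s i)).
have H2 := derivableM (derivable_cst ((-1) ^+ odd_perm s : R^o) p v) H.
exact: H2.
Qed.

Lemma cvg_bigsum (T : Type) (F : set_system T) (FF : Filter F) (I : Type) (r : seq I)
  (P : pred I) (f : I -> T -> R^o) (l : I -> R^o) :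
  (forall i, P i -> f i x @[x --> F] --> l i) ->
  (\sum_(i <- r | P i) f i x) @[x --> F] --> \sum_(i <- r | P i) l i.
Proof.
move=> cf; elim: r => [|i r IH].
  rewrite big_nil; under eq_cvg do rewrite big_nil; exact: cvg_cst.
rewrite big_cons; under eq_cvg do rewrite big_cons.
case: (boolP (P i)) => Pi; last exact: IH.
exact: cvgD (cf i Pi) IH.
Qed.

Lemma cvg_bigprod (T : Type) (F : set_system T) (FF : Filter F) (I : Type) (r : seq I)
  (P : pred I) (f : I -> T -> R^o) (l : I -> R^o) :
  (forall i, P i -> f i x @[x --> F] --> l i) ->
  (\prod_(i <- r | P i) f i x) @[x --> F] --> \prod_(i <- r | P i) l i.
Proof.
move=> cf; elim: r => [|i r IH].
  rewrite big_nil; under eq_cvg do rewrite big_nil; exact: cvg_cst.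
rewrite big_cons; under eq_cvg do rewrite big_cons.
case: (boolP (P i)) => Pi; last exact: IH.
exact: cvgM (cf i Pi) IH.
Qed.

Lemma cvg_det (T : Type) (F : set_system T) (FF : Filter F) m (M : T -> 'M[R]_m) (M0 : 'M[R]_m) :
  (forall i j, (M x i j : R^o) @[x --> F] --> M0 i j) ->
  (\det (M x) : R^o) @[x --> F] --> \det M0.
Proof.
move=> cM; rewrite /determinant.
apply: cvg_bigsum => s _.
apply: cvgM; first exact: cvg_cst.
by apply: cvg_bigprod => i _; apply: cM.
Qed.

End P1.

Section P2.
Variable R : realType.

Lemma rv_self_eq0 m (z : 'rV[R]_m) : z *m z^T = 0 -> z = 0.
Proof.
move=> /(congr1 (fun M : 'M[R]_1 => M 0 0)); rewrite !mxE => hs.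
have H := @psumr_eq0P R _ predT (fun j => z 0 j * z^T j 0).
have {}H : forall i, z 0 i * z^T i 0 = 0.
  move=> i; apply: H => //; move=> j _; by rewrite mxE -expr2 sqr_ge0.
apply/rowP => i; rewrite mxE.
by have := H i; rewrite mxE => /eqP; rewrite mulf_eq0 orbb => /eqP.
Qed.

Lemma B0_unit m (M0 : 'M[R]_m) : M0^T = M0 ->
  \det (row_base M0 *m M0 *m (row_base M0)^T) != 0.
Proof.
move=> sM; set X := row_base M0.
apply/negP => /det0P [u u0 uB]; move/negP: u0; apply.
have XM : (X :=: M0)%MS by exact: eq_row_base.
set z := u *m X *m M0.
have zX : z *m X^T = 0 by move: uB; rewrite /z !mulmxA.
have : (z <= X)%MS by rewrite XM /z submxMl.
case/submxP => c zc.
have z0 : z = 0.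
  apply: rv_self_eq0; rewrite {2}zc trmx_mul mulmxA zX mul0mx //.
set y := u *m X.
have : (y <= M0)%MS by rewrite -XM /y submxMl.
case/submxP => c' yc.
have y0 : y = 0.
  apply: rv_self_eq0; rewrite {2}yc trmx_mul sM mulmxA.
  by move: z0; rewrite /z -/y => ->; rewrite mul0mx.
apply/eqP; apply: (row_free_inj (row_base_free M0)).
by rewrite mul0mx.
Qed.

Lemma cvg_mul3 (T : Type) (Fl : set_system T) (FF : Filter Fl) a b c d
  (L : 'M[R]_(a,b)) (F : T -> 'M[R]_(b,c)) (F0 : 'M[R]_(b,c)) (P : 'M[R]_(c,d)) :
  (forall i j, (F x i j : R^o) @[x --> Fl] --> F0 i j) ->
  forall i j, ((L *m F x *m P) i j : R^o) @[x --> Fl] --> (L *m F0 *m P) i j.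
Proof.
move=> cF i j; under eq_cvg do rewrite mxE; rewrite mxE.
apply: cvg_bigsum => k _; apply: cvgM; last exact: cvg_cst.
under eq_cvg do rewrite mxE; rewrite mxE.
apply: cvg_bigsum => l _; apply: cvgM; [exact: cvg_cst | exact: cF].
Qed.

Lemma keyK m (M : R -> 'M[R]_m) (D : 'M[R]_m) (v w : 'rV[R]_m) :
  (M 0)^T = M 0 ->
  (\forall h \near (0:R)^', (\rank (M h) <= \rank (M 0%R))%N) ->
  (forall i j, (h^-1 * (M h i j - M 0 i j) : R^o) @[h --> (0:R)^'] --> D i j) ->
  v *m M 0 = 0 -> w *m M 0 = 0 ->
  (w *m D *m v^T) 0 0 = 0.
Proof.
move=> sM rk cQ vM wM.
set M0 := M 0 in sM rk cQ vM wM *.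
set X := row_base M0.
set B0 := X *m M0 *m X^T.
have dB : \det B0 != 0 := @B0_unit m M0 sM.
set L := col_mx X w.
pose P1 : 'M[R]_(m, \rank M0 + 1) := row_mx X^T 0.
pose P2 : 'M[R]_(m, \rank M0 + 1) := row_mx 0 v^T.
pose Q h := \matrix_(i,j) (h^-1 * (M h i j - M0 i j)).
pose Z h := L *m M h *m P1 + L *m Q h *m P2.
pose Z0 := L *m M0 *m P1 + L *m D *m P2.
have cM : forall i j, (M h i j : R^o) @[h --> (0:R)^'] --> M0 i j.
  move=> i j.
  have : ((M0 i j + h * (h^-1 * (M h i j - M0 i j))) : R^o) @[h --> (0:R)^'] --> M0 i j + 0 * D i j.
    apply: cvgD; first exact: cvg_cst.
    apply: cvgM; last exact: cQ.
    exact: cvg_within.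
  rewrite mul0r addr0; apply: cvg_trans; apply: near_eq_cvg; near=> h.
  have h0 : h != 0 by near: h; exact: nbhs_dnbhs_neq.
  by rewrite mulrA mulfV // mul1r addrC subrK.
have cZ : forall i j, (Z h i j : R^o) @[h --> (0:R)^'] --> Z0 i j.
  move=> i j; under eq_cvg do rewrite mxE; rewrite mxE.
  apply: cvgD; first exact: cvg_mul3.
  apply: cvg_mul3 => k l; under eq_cvg do rewrite mxE; exact: cQ.
have M0P2 : M0 *m P2 = 0.
  rewrite /P2 mul_mx_row mulmx0.
  have -> : M0 *m v^T = 0 by rewrite -sM -trmx_mul vM trmx0.
  by rewrite row_mx0.
have dZ : \forall h \near (0:R)^', \det (Z h) = 0.
  near=> h.
  have h0 : h != 0 by near: h; exact: nbhs_dnbhs_neq.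
  have rkh : (\rank (M h) <= \rank M0)%N by near: h; exact: rk.
  have Qe : Q h = h^-1 *: (M h - M0) by apply/matrixP => i j; rewrite !mxE.
  have -> : Z h = L *m M h *m (P1 + h^-1 *: P2).
    rewrite /Z Qe mulmxDr; congr (_ + _).
    rewrite -scalemxAr -scalemxAl mulmxBr mulmxBl -(mulmxA L M0) M0P2 mulmx0 subr0.
    by rewrite scalemxAr.
  have [//|hdet] := eqVneq (\det (L *m M h *m (P1 + h^-1 *: P2))) 0; exfalso.
  have : row_free (L *m M h *m (P1 + h^-1 *: P2)) by rewrite row_free_unit unitmxE unitfE.
  rewrite /row_free => /eqP rkZ.
  have := mxrankM_maxl (L *m M h) (P1 + h^-1 *: P2).
  rewrite rkZ => H1; have := mxrankM_maxr L (M h).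
  move=> H2; have := leq_trans H1 (leq_trans H2 rkh).
  by rewrite addn1 ltnn.
have det0 : \det Z0 = 0.
  have c : (\det (Z x) : R^o) @[x --> (0:R)^'] --> \det Z0.
    by apply: cvg_det => //; exact: cZ.
  have c2 : (\det (Z x) : R^o) @[x --> (0:R)^'] --> (0:R^o) by exact: cvg_near_cst dZ.
  exact: (cvg_unique _ c c2).
have Z0E : Z0 = block_mx B0 (X *m D *m v^T) 0 (w *m D *m v^T).
  rewrite /Z0 /L /P1 /P2 !mul_col_mx wM !mul_mx_row !mulmx0 !mul0mx.
  by rewrite add_col_mx !add_row_mx !addr0 !add0r /block_mx.
move: det0; rewrite Z0E det_ublock det_mx11 => /eqP.
by rewrite mulf_eq0 (negbTE dB) /= => /eqP.
Unshelve. all: by end_near.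
Qed.
End P2.

Section P3.
Variables (R : realType) (n : nat).
Local Notation V := 'rV[R]_n.

Definition Amx (G T : V -> 'M[R]_n) (rho : V -> R) q : 'M[R]_n := T q - rho q *: G q.
Definition dM (F : V -> 'M[R]_n) (a : 'I_n) (p : V) : 'M[R]_n :=
  \matrix_(i,j) partial a (fun q => F q i j) p.

Lemma near_U (U : set V) p (e : V) : open U -> U p -> \forall h \near (0:R)^', U (h *: e + p).
Proof.
move=> oU Up.
have nU : nbhs p U by apply: open_nbhs_nbhs; split.
have c : (fun h : R => h *: e + p) @ (0:R)^' --> (0:R) *: e + p.
  apply: cvgD; last exact: cvg_cst.
  apply: cvgZr_tmp; exact: cvg_within.
rewrite scale0r add0r in c.
exact: c nU.
Qed.

Lemma nbhs_U (U : set V) p : open U -> U p -> \forall q \near p, U q.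
Proof. by move=> oU Up; apply: open_nbhs_nbhs; split. Qed.

Lemma eig_ker (G T : V -> 'M[R]_n) rho q v : G q \in unitmx ->
  in_eig G T rho q v -> v *m Amx G T rho q = 0.
Proof.
move=> Gu; rewrite /in_eig /Espace /eigenspace sub_kermx => /eqP H.
have E : endo G T q - (rho q)%:M = Amx G T rho q *m ginv G q.
  by rewrite /endo /Amx /ginv mulmxBl -scalemxAl mulmxV // scalemx1.
rewrite -(mulmxKV Gu (v *m _)) -(mulmxA v) -/(ginv G q) -E H mul0mx //.
Qed.

Lemma rank_Espace (G T : V -> 'M[R]_n) rho q : G q \in unitmx ->
  \rank (Espace G T rho q) = (n - \rank (Amx G T rho q))%N.
Proof.
move=> Gu; rewrite /Espace /eigenspace mxrank_ker.
have E : endo G T q - (rho q)%:M = Amx G T rho q *m ginv G q.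
  by rewrite /endo /Amx /ginv mulmxBl -scalemxAl mulmxV // scalemx1.
by rewrite E mxrankMfree // row_free_unit unitmx_inv.
Qed.

Lemma rank_Amx_eq (U : set V) (G T : V -> 'M[R]_n) rho p q :
  metric_on U G -> regular_eigenspace_on U G T rho -> U p -> U q ->
  \rank (Amx G T rho q) = \rank (Amx G T rho p).
Proof.
move=> [_ mG] [[r hr] _] Up Uq.
have := hr p Up; have := hr q Uq.
rewrite (rank_Espace T rho (mG q Uq).2) (rank_Espace T rho (mG p Up).2).
move=> e1 e2; rewrite -(subKn (rank_leq_col (Amx G T rho q))) e1 -e2.
by rewrite subKn // rank_leq_col.
Qed.


Lemma sm_der (U : set V) (f : V -> R) p i : smooth_on U f -> U p ->
  derivable (f : V -> R^o) p (ecoord R i).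
Proof. by move=> hs Up; exact: ((hs 1%N).1 i p Up). Qed.

Lemma smx_der (U : set V) (A : V -> 'M[R]_n) p a i j : smooth_mx_on U A -> U p ->
  derivable ((fun q => A q i j) : V -> R^o) p (ecoord R a).
Proof. by move=> hs Up; apply: sm_der (hs i j) Up. Qed.

Lemma Amx_fun (G T : V -> 'M[R]_n) rho i j :
  (fun q => Amx G T rho q i j) = ((fun q => T q i j) - (rho * (fun q => G q i j)) : V -> R^o).
Proof. by apply: funext => q; rewrite /Amx !mxE. Qed.

Lemma der_Amx (U : set V) (G T : V -> 'M[R]_n) rho p a i j :
  smooth_mx_on U G -> smooth_mx_on U T -> smooth_on U rho -> U p ->
  derivable ((fun q => Amx G T rho q i j) : V -> R^o) p (ecoord R a).
Proof.
move=> sG sT sr Up; rewrite Amx_fun.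
apply: derivableB; first exact: smx_der sT Up.
apply: derivableM; [exact: sm_der sr Up | exact: smx_der sG Up].
Qed.

Lemma dAmxE (U : set V) (G T : V -> 'M[R]_n) rho p a :
  smooth_mx_on U G -> smooth_mx_on U T -> smooth_on U rho -> U p ->
  dM (Amx G T rho) a p = dM T a p - partial a rho p *: G p - rho p *: dM G a p.
Proof.
move=> sG sT sr Up; apply/matrixP => i j; rewrite !mxE /partial Amx_fun.
rewrite deriveB; [|exact: smx_der sT Up|].
  rewrite deriveM; [|exact: sm_der sr Up|exact: smx_der sG Up].
  rewrite /GRing.scale /= [X in _ - (_ + X)]mulrC.
  by rewrite opprD addrA [in RHS]addrAC.
apply: derivableM; [exact: sm_der sr Up | exact: smx_der sG Up].
Qed.

Lemma Kpoint (U : set V) (G T : V -> 'M[R]_n) rho p a (v w : V) :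
  open U -> metric_on U G -> smooth_on U rho -> symmetric_field_on U T ->
  regular_eigenspace_on U G T rho -> U p ->
  v *m Amx G T rho p = 0 -> w *m Amx G T rho p = 0 ->
  (w *m dM (Amx G T rho) a p *m v^T) 0 0 = 0.
Proof.
move=> oU mG sr sT reg Up vA wA.
have [sG Gs] := mG; have [sT' Ts] := sT.
apply: (@keyK R n (fun h => Amx G T rho (h *: ecoord R a + p))); rewrite /= scale0r add0r //.
- rewrite /Amx linearB /= linearZ /= (Gs p Up).1 Ts //.
- have := near_U (ecoord R a) oU Up; apply: filterS => h Uh.
  by rewrite (rank_Amx_eq mG reg Up Uh).
- move=> i j; have d := der_Amx (a:=a) (i:=i) (j:=j) sG sT' sr Up.
  have -> : dM (Amx G T rho) a p i j = partial a (fun q => Amx G T rho q i j) p.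
    by rewrite /dM mxE.
  exact: d.
Qed.

End P3.

Section P4.
Variables (R : realType) (n : nat).
Local Notation V := 'rV[R]_n.

Definition Gam (G : V -> 'M[R]_n) (a : 'I_n) (p : V) : 'M[R]_n :=
  \matrix_(b,k) christoffel G k a b p.
Definition NT (G T : V -> 'M[R]_n) (a : 'I_n) (p : V) : 'M[R]_n :=
  \matrix_(b,c) nablaT G T a b c p.

Lemma sum_delta (f : 'I_n -> R) c : \sum_l f l * (1%:M : 'M[R]_n) l c = f c.
Proof.
rewrite (bigD1 c) //= mxE eqxx mulr1 big1 ?addr0 // => l /negPf.
by rewrite mxE => ->; rewrite mulr0.
Qed.

Lemma NT_mx G T a p : NT G T a p = dM T a p - Gam G a p *m T p - T p *m (Gam G a p)^T.
Proof.
apply/matrixP => b c; rewrite !mxE /nablaT; congr (_ - _ - _).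
  by apply: eq_bigr => k _; rewrite mxE.
by apply: eq_bigr => k _; rewrite !mxE mulrC.
Qed.

Lemma dM_sym (U : set V) (F : V -> 'M[R]_n) a p : open U -> U p ->
  (forall q, U q -> (F q)^T = F q) -> (dM F a p)^T = dM F a p.
Proof.
move=> oU Up sF; apply/matrixP => i j; rewrite !mxE /partial.
apply: near_eq_derive; have := nbhs_U oU Up; apply: filterS => q Uq.
by rewrite -{1}(sF q Uq) mxE.
Qed.

Lemma GamG_entry (G : V -> 'M[R]_n) a p b c : (G p)^T = G p -> G p \in unitmx ->
  (Gam G a p *m G p) b c = 2^-1 * (dM G a p b c + dM G b p a c - dM G c p a b).
Proof.
move=> sG uG; rewrite mxE.
under eq_bigr do rewrite mxE /christoffel -mulrA mulr_suml.
rewrite -mulr_sumr exchange_big /=; congr (_ * _).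
have E : forall l, \sum_k ginv G p k l * G p k c = (1%:M : 'M[R]_n) l c.
  move=> l; have sGi : (ginv G p)^T = ginv G p by rewrite /ginv trmx_inv sG.
  rewrite -(mulVmx uG) mxE; apply: eq_bigr => k _.
  by rewrite -[in LHS]sGi mxE.
rewrite !mxE.
transitivity (\sum_l (partial a (fun q => G q b l) p + partial b (fun q => G q a l) p
   - partial l (fun q => G q a b) p) * (1%:M : 'M[R]_n) l c); last by rewrite sum_delta.
apply: eq_bigr => l _.
rewrite -E mulr_sumr; apply: eq_bigr => k _.
by rewrite mulrA [ginv G p k l * _]mulrC.
Qed.


Lemma GamG (G : V -> 'M[R]_n) a p : (G p)^T = G p -> G p \in unitmx ->
  (dM G a p)^T = dM G a p ->
  Gam G a p *m G p + (Gam G a p *m G p)^T = dM G a p.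
Proof.
move=> sG uG sdG; apply/matrixP => b c.
rewrite mxE [(_^T) b c]mxE !GamG_entry //.
have -> : dM G a p c b = dM G a p b c by rewrite -{1}sdG mxE.
by field.
Qed.

Lemma NT_sym (G T : V -> 'M[R]_n) a p : (T p)^T = T p -> (dM T a p)^T = dM T a p ->
  (NT G T a p)^T = NT G T a p.
Proof.
move=> sT sdT; rewrite NT_mx !linearB /= sdT !trmx_mul trmxK sT.
by rewrite addrAC.
Qed.


Lemma step2 (U : set V) (G T : V -> 'M[R]_n) rho p a (v w : V) :
  open U -> metric_on U G -> smooth_on U rho -> symmetric_field_on U T ->
  regular_eigenspace_on U G T rho -> U p ->
  v *m Amx G T rho p = 0 -> w *m Amx G T rho p = 0 ->
  v *m NT G T a p *m w^T = partial a rho p *: (v *m G p *m w^T).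
Proof.
move=> oU mG sr sT reg Up vA wA.
have K := Kpoint a oU mG sr sT reg Up wA vA.
have [sG Gs] := mG; have [sT' Ts] := sT.
have [sGp uGp] := Gs p Up.
have sdG : (dM G a p)^T = dM G a p by apply: (dM_sym a oU Up) => q Uq; case: (Gs q Uq).
have vT : v *m T p = rho p *: (v *m G p).
  by apply/eqP; rewrite -subr_eq0 scalemxAr -mulmxBr -vA.
have Tw : T p *m w^T = rho p *: (G p *m w^T).
  have : w *m T p = rho p *: (w *m G p).
    by apply/eqP; rewrite -subr_eq0 scalemxAr -mulmxBr -wA.
  move/(congr1 trmx); rewrite trmx_mul (Ts p Up) linearZ /= trmx_mul sGp => ->//.
have E1 : v *m NT G T a p *m w^T =
    v *m dM T a p *m w^T - rho p *: (v *m dM G a p *m w^T).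
  rewrite NT_mx -(GamG sGp uGp sdG) !mulmxBr !mulmxBl.
  rewrite -!mulmxA Tw (mulmxA v (T p)) vT trmx_mul sGp.
  rewrite !mulmxDl !mulmxDr -!scalemxAr -!scalemxAl !mulmxA.
  by rewrite scalerDr opprD addrA.
have K' : v *m dM (Amx G T rho) a p *m w^T = 0.
  apply/matrixP => i j; rewrite !ord1 K mxE //.
rewrite (dAmxE a sG sT' sr Up) !mulmxBr !mulmxBl -!scalemxAr -!scalemxAl in K'.
rewrite E1; apply/eqP; rewrite -subr_eq0; apply/eqP; rewrite -K'.
by rewrite addrAC.
Qed.

End P4.

Section P5.
Variables (R : realType) (n : nat).
Local Notation V := 'rV[R]_n.

Definition S3 (f : 'I_n -> 'I_n -> 'I_n -> R) : R := \sum_a \sum_b \sum_c f a b c.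

Lemma S3_ext f g : (forall a b c, f a b c = g a b c) -> S3 f = S3 g.
Proof. by move=> e; apply: eq_bigr => a _; apply: eq_bigr => b _; apply: eq_bigr => c _. Qed.

Lemma S3_add f g : S3 (fun a b c => f a b c + g a b c) = S3 f + S3 g.
Proof.
rewrite /S3 -big_split; apply: eq_bigr => a _; rewrite -big_split.
by apply: eq_bigr => b _; rewrite -big_split.
Qed.

Lemma ex12 f : S3 f = S3 (fun a b c => f b a c).
Proof. by rewrite /S3 exchange_big. Qed.

Lemma ex23 f : S3 f = S3 (fun a b c => f a c b).
Proof. by apply: eq_bigr => a _; rewrite exchange_big. Qed.

Definition C3 (F : 'I_n -> 'I_n -> 'I_n -> R) (u v w : V) : R :=
  S3 (fun a b c => u 0 a * v 0 b * w 0 c * F a b c).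

Lemma C3_sym3 F u v w : C3 (fun a b c => sym3 F a b c) u v w =
  C3 F u v w + C3 F u w v + C3 F v u w + C3 F v w u + C3 F w u v + C3 F w v u.
Proof.
rewrite /C3 /sym3.
rewrite (S3_ext (g := fun a b c =>
   u 0 a * v 0 b * w 0 c * F a b c + u 0 a * v 0 b * w 0 c * F a c b +
   u 0 a * v 0 b * w 0 c * F b a c + u 0 a * v 0 b * w 0 c * F b c a +
   u 0 a * v 0 b * w 0 c * F c a b + u 0 a * v 0 b * w 0 c * F c b a)); last first.
  by move=> a b c; ring.
rewrite !S3_add; congr (_ + _ + _ + _ + _ + _).
- by rewrite ex23; apply: S3_ext => a b c; ring.
- by rewrite ex12; apply: S3_ext => a b c; ring.
- by rewrite ex12 ex23; apply: S3_ext => a b c; ring.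
- by rewrite ex23 ex12; apply: S3_ext => a b c; ring.
- by rewrite ex12 ex23 ex12; apply: S3_ext => a b c; ring.
Qed.

Lemma bilE (v w : V) (M : 'M[R]_n) :
  (v *m M *m w^T) 0 0 = \sum_b \sum_c v 0 b * w 0 c * M b c.
Proof.
rewrite mxE; under eq_bigr do rewrite !mxE mulr_suml.
rewrite exchange_big /=; apply: eq_bigr => b _; apply: eq_bigr => c _.
by ring.
Qed.

Lemma gformE (G : V -> 'M[R]_n) p (x y : V) : gform G p x y = (x *m G p *m y^T) 0 0.
Proof.
rewrite bilE /gform; apply: eq_bigr => a _; apply: eq_bigr => b _; ring.
Qed.

Lemma bil_sym (M : 'M[R]_n) (x y : V) : M^T = M -> (x *m M *m y^T) 0 0 = (y *m M *m x^T) 0 0.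
Proof.
move=> sM; rewrite -[in LHS](trmxK (x *m M *m y^T)) mxE.
by rewrite !trmx_mul sM trmxK mulmxA.
Qed.



Lemma mxD00 (A B : 'M[R]_1) : (A + B) 0 0 = A 0 0 + B 0 0.
Proof. by rewrite mxE. Qed.

Lemma bil_add (M : 'M[R]_n) (v w : V) : M^T = M ->
  ((v + w) *m M *m (v + w)^T) 0 0 =
  (v *m M *m v^T) 0 0 + (w *m M *m w^T) 0 0 + 2%:R * (v *m M *m w^T) 0 0.
Proof.
move=> sM; rewrite linearD /= !mulmxDl !mulmxDr !mxD00 (bil_sym w v sM).
ring.
Qed.

Lemma polar (S M : 'M[R]_n) (al : V) :
  M^T = M ->
  (forall u v w : V, (u <= S)%MS -> (v <= S)%MS -> (w <= S)%MS ->
     (u *m al^T) 0 0 * (v *m M *m w^T) 0 0 + (v *m al^T) 0 0 * (u *m M *m w^T) 0 0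
     + (w *m al^T) 0 0 * (u *m M *m v^T) 0 0 = 0) ->
  (forall v : V, (v <= S)%MS -> (forall w : V, (w <= S)%MS -> (v *m M *m w^T) 0 0 = 0) -> v = 0) ->
  forall v : V, (v <= S)%MS -> (v *m al^T) 0 0 = 0.
Proof.
move=> sM H nd v vS.
case: (pselect (exists e : V, (e <= S)%MS /\ (e *m M *m e^T) 0 0 != 0)).
  move=> [e [eS ge]].
  have ae : (e *m al^T) 0 0 = 0.
    have := H e e e eS eS eS.
    have -> : forall x y : R, x * y + x * y + x * y = 3%:R * x * y by move=> x y; ring.
    move/eqP; rewrite !mulf_eq0 (negbTE ge) orbF pnatr_eq0 /=.
    by move/eqP.
  have := H v e e vS eS eS; rewrite ae !mul0r !addr0 => /eqP.
  by rewrite mulf_eq0 (negbTE ge) orbF => /eqP.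
move=> Hno.
have gee : forall e : V, (e <= S)%MS -> (e *m M *m e^T) 0 0 = 0.
  move=> e eS; apply/eqP; apply/negP => ne; apply: Hno; exists e; split => //.
  by apply/negP.
have -> : v = 0.
  apply: nd => // w wS.
  have := gee (v + w) (addmx_sub vS wS).
  rewrite bil_add // gee // gee // add0r => /eqP.
  by rewrite add0r mulf_eq0 pnatr_eq0 /= => /eqP.
by rewrite mul0mx mxE.
Qed.


End P5.

Section P6.
Variables (R : realType) (n : nat).
Local Notation V := 'rV[R]_n.

Lemma C3_NT (U : set V) (G T : V -> 'M[R]_n) rho p (u v w : V) :
  open U -> metric_on U G -> smooth_on U rho -> symmetric_field_on U T ->
  regular_eigenspace_on U G T rho -> U p ->
  v *m Amx G T rho p = 0 -> w *m Amx G T rho p = 0 ->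
  C3 (fun a b c => nablaT G T a b c p) u v w =
  (\sum_a u 0 a * partial a rho p) * (v *m G p *m w^T) 0 0.
Proof.
move=> oU mG sr sT reg Up vA wA.
rewrite /C3 /S3 mulr_suml; apply: eq_bigr => a _.
have := step2 a oU mG sr sT reg Up vA wA.
move/(congr1 (fun A : 'M[R]_1 => A 0 0)); rewrite [in RHS]mxE => E.
transitivity (u 0 a * \sum_b \sum_c v 0 b * w 0 c * NT G T a p b c); last first.
  by rewrite -bilE E mulrA.
rewrite mulr_sumr; apply: eq_bigr => b _; rewrite mulr_sumr; apply: eq_bigr => c _.
by rewrite mxE; ring.
Qed.

Lemma C3_Gt (G : V -> 'M[R]_n) p (t : 'I_n -> R) (u v w : V) :
  C3 (fun a b c => G p a b * t c) u v w =
  (u *m G p *m v^T) 0 0 * (\sum_c w 0 c * t c).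
Proof.
rewrite bilE /C3 /S3 mulr_suml; apply: eq_bigr => a _.
rewrite mulr_suml; apply: eq_bigr => b _.
rewrite mulr_sumr; apply: eq_bigr => c _; ring.
Qed.


Lemma alpha0 (U : set V) (G T : V -> 'M[R]_n) rho p (t : 'I_n -> R) :
  open U -> metric_on U G -> smooth_on U rho -> symmetric_field_on U T ->
  regular_eigenspace_on U G T rho -> U p ->
  (forall a b c, sym3 (fun a b c => nablaT G T a b c p) a b c =
                 sym3 (fun a b c => G p a b * t c) a b c) ->
  forall v, in_eig G T rho p v -> \sum_a v 0 a * (partial a rho p - t a) = 0.
Proof.
move=> oU mG sr sT reg Up Hs.
have [sG Gs] := mG; have [sGp uGp] := Gs p Up.
pose al : V := \row_a (partial a rho p - t a).
have alE : forall u : V, (u *m al^T) 0 0 = \sum_a u 0 a * partial a rho p - \sum_a u 0 a * t a.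
  move=> u; rewrite mxE -sumrB; apply: eq_bigr => a _; rewrite !mxE; ring.
move=> v vE; rewrite -[LHS]/(\sum_a v 0 a * (partial a rho p - t a)).
have -> : \sum_a v 0 a * (partial a rho p - t a) = (v *m al^T) 0 0.
  by rewrite mxE; apply: eq_bigr => a _; rewrite !mxE.
apply: (@polar R n (Espace G T rho p) (G p)) => //.
- move=> x y z xS yS zS.
  have xA := eig_ker uGp xS; have yA := eig_ker uGp yS; have zA := eig_ker uGp zS.
  have E : C3 (fun a b c => sym3 (fun a b c => nablaT G T a b c p) a b c) x y z =
           C3 (fun a b c => sym3 (fun a b c => G p a b * t c) a b c) x y z.
    by apply: S3_ext => a b c; rewrite Hs.
  rewrite !C3_sym3 !C3_Gt !(C3_NT _ oU mG sr sT reg Up) // in E.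
  rewrite !alE.
  rewrite (bil_sym z y sGp) (bil_sym z x sGp) (bil_sym y x sGp) in E.
  move: E.
  set dx := \sum_a x 0 a * partial a rho p.
  set dy := \sum_a y 0 a * partial a rho p.
  set dz := \sum_a z 0 a * partial a rho p.
  set tx := \sum_a x 0 a * t a.
  set ty := \sum_a y 0 a * t a.
  set tz := \sum_a z 0 a * t a.
  set gxy := (x *m G p *m y^T) 0 0.
  set gxz := (x *m G p *m z^T) 0 0.
  set gyz := (y *m G p *m z^T) 0 0.
  move=> E.
  have E2 : ((dx - tx) * gyz + (dy - ty) * gxz + (dz - tz) * gxy) * 2 =
     (dx * gyz + dx * gyz + dy * gxz + dy * gxz + dz * gxy + dz * gxy) -
     (gxy * tz + gxz * ty + gxy * tz + gyz * tx + gxz * ty + gyz * tx) by ring.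
  move: E2; rewrite E subrr => /eqP; rewrite mulf_eq0 pnatr_eq0 orbF => /eqP //.
- move=> x xS H; apply: (reg.2 p Up x xS) => y yS; rewrite gformE; exact: H.
Qed.

End P6.

Section P7.
Variables (R : realType) (n : nat).
Local Notation V := 'rV[R]_n.

Definition drow (y : V -> V) (i : 'I_n) (p : V) : V := \row_k partial i (fun q => y q 0 k) p.

Lemma dsumprod (f g : 'I_n -> V -> R) p (v : V) :
  (forall b, derivable (f b : V -> R^o) p v) -> (forall b, derivable (g b : V -> R^o) p v) ->
  'D_v ((fun q => \sum_b f b q * g b q) : V -> R^o) p =
  \sum_b (f b p * 'D_v (g b : V -> R^o) p + g b p * 'D_v (f b : V -> R^o) p).
Proof.
move=> df dg.
have -> : ((fun q => \sum_b f b q * g b q) : V -> R^o) =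
   \sum_b ((fun q => f b q * g b q) : V -> R^o) by rewrite fct_sumE.
rewrite derive_sum; last by move=> b; exact: (derivableM (df b) (dg b)).
apply: eq_bigr => b _.
by rewrite (deriveM (df b) (dg b)).
Qed.

Lemma F3 (U : set V) (G T : V -> 'M[R]_n) rho (y : V -> V) p i :
  open U -> metric_on U G -> smooth_on U rho -> symmetric_field_on U T ->
  smooth_vf_on U y -> (forall q, U q -> in_eig G T rho q (y q)) -> U p ->
  drow y i p *m Amx G T rho p + y p *m dM (Amx G T rho) i p = 0.
Proof.
move=> oU [sG Gs] sr [sT Ts] sy yE Up.
apply/rowP => c.
have E : partial i (fun q => \sum_b y q 0 b * Amx G T rho q b c) p = 0.
  rewrite /partial.
  rewrite (@near_eq_derive _ _ _ _ (cst (0 : R^o))); first exact: derive_cst.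
  have := nbhs_U oU Up; apply: filterS => q Uq.
  have := eig_ker (Gs q Uq).2 (yE q Uq).
  by move/(congr1 (fun A : 'M[R]_(1,n) => A 0 c)); rewrite !mxE.
rewrite [RHS]mxE -[RHS]E /partial.
rewrite (dsumprod (f := fun b q => y q 0 b) (g := fun b q => Amx G T rho q b c)).
- rewrite mxE -!/(mulmx _ _) !mxE -big_split /=; apply: eq_bigr => b _; rewrite !mxE /partial; ring.
- by move=> b; exact: sm_der (sy b) Up.
- by move=> b; exact: der_Amx sG sT sr Up.
Qed.

End P7.

Section P8.
Variables (R : realType) (n : nat).
Local Notation V := 'rV[R]_n.

Lemma nablaV_mx (G : V -> 'M[R]_n) (x y : V -> V) p :
  nablaV G x y p = \sum_i x p 0 i *: (drow y i p + y p *m Gam G i p).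
Proof.
apply/rowP => k; rewrite !mxE summxE -big_split /=.
apply: eq_bigr => i _; rewrite !mxE mulrDr; congr (_ + _).
rewrite mulr_sumr; apply: eq_bigr => j _; rewrite !mxE; ring.
Qed.

Lemma K1alg (A T G dT dG Ga N : 'M[R]_n) (r dr : R) (z dz : V) :
  A = T - r *: G -> N = dT - Ga *m T - T *m Ga^T -> Ga *m G + (Ga *m G)^T = dG ->
  G^T = G -> z *m A = 0 -> dz *m A + z *m (dT - dr *: G - r *: dG) = 0 ->
  (dz + z *m Ga) *m A = - (z *m N) + dr *: (z *m G).
Proof.
move=> eA eN eG sG zA F.
have zT : z *m T = r *: (z *m G).
  by apply/eqP; rewrite -subr_eq0 scalemxAr -mulmxBr -eA zA.
have e1 : dz *m A = - (z *m dT) + dr *: (z *m G) + r *: (z *m Ga *m G) + r *: (z *m G *m Ga^T).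
  have -> : dz *m A = - (z *m (dT - dr *: G - r *: dG)) by apply/eqP; rewrite -addr_eq0 F.
  rewrite -eG trmx_mul sG !mulmxBr -!scalemxAr mulmxDr !mulmxA.
  set a1 := z *m dT; set a2 := z *m G; set a3 := z *m Ga *m G; set a4 := z *m G *m Ga^T.
  by apply/rowP => k; rewrite !mxE; ring.
have e2 : z *m Ga *m A = z *m Ga *m T - r *: (z *m Ga *m G).
  by rewrite eA mulmxBr -scalemxAr.
have e3 : z *m N = z *m dT - z *m Ga *m T - r *: (z *m G *m Ga^T).
  by rewrite eN !mulmxBr !mulmxA zT -scalemxAl.
rewrite mulmxDl e1 e2 e3.
set a1 := z *m dT; set a2 := z *m G; set a3 := z *m Ga *m G; set a4 := z *m G *m Ga^T.
set a5 := z *m Ga *m T.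
by apply/rowP => k; rewrite !mxE; ring.
Qed.

End P8.

Section P9.
Variables (R : realType) (n : nat).
Local Notation V := 'rV[R]_n.

Lemma sum_e (f : 'I_n -> R) a : \sum_c (delta_mx 0 a : V) 0 c * f c = f a.
Proof.
rewrite (bigD1 a) //= mxE !eqxx mul1r big1 ?addr0 // => c /negPf.
by rewrite mxE => ->; rewrite andbF mul0r.
Qed.

Lemma C3_e (F : 'I_n -> 'I_n -> 'I_n -> R) (u v : V) a :
  C3 F u v (delta_mx 0 a) = \sum_i \sum_b u 0 i * v 0 b * F i b a.
Proof.
apply: eq_bigr => i _; apply: eq_bigr => b _.
rewrite -(sum_e (fun c => u 0 i * v 0 b * F i b c)); apply: eq_bigr => c _; ring.
Qed.

Lemma bil_e (u : V) (M : 'M[R]_n) a : (u *m M *m (delta_mx 0 a : V)^T) 0 0 = (u *m M) 0 a.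
Proof.
rewrite mxE -(sum_e (fun c => (u *m M) 0 c)); apply: eq_bigr => c _.
by rewrite [(_^T) _ _]mxE mulrC.
Qed.

Lemma C3_swap23 (F : 'I_n -> 'I_n -> 'I_n -> R) (u v w : V) :
  (forall a b c, F a b c = F a c b) -> C3 F u v w = C3 F u w v.
Proof.
move=> sF; rewrite /C3 ex23; apply: S3_ext => a b c; rewrite sF; ring.
Qed.

Lemma entry_lemma (M : 'I_n -> V) (c d : 'I_n -> R) (w : V) a :
  (\sum_i c i *: (- M i + d i *: w)) 0 a = - \sum_i c i * M i 0 a + (\sum_i c i * d i) * w 0 a.
Proof.
rewrite summxE mulr_suml -sumrN -big_split /=; apply: eq_bigr => i _.
rewrite !mxE; ring.
Qed.


Lemma rvD (A B : V) a : (A + B) 0 a = A 0 a + B 0 a.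
Proof. by rewrite mxE. Qed.

Lemma part1core (U : set V) (G T : V -> 'M[R]_n) rho (t : 'I_n -> R) (x y : V -> V) p :
  open U -> metric_on U G -> smooth_on U rho -> symmetric_field_on U T ->
  regular_eigenspace_on U G T rho -> U p ->
  (forall a b c, sym3 (fun a b c => nablaT G T a b c p) a b c =
                 sym3 (fun a b c => G p a b * t c) a b c) ->
  smooth_vf_on U x -> smooth_vf_on U y ->
  (forall q, U q -> in_eig G T rho q (x q)) ->
  (forall q, U q -> in_eig G T rho q (y q)) ->
  forall a, \sum_b (T p a b - rho p * G p a b) * symbr G x y p 0 b =
            gform G p (x p) (y p) * (partial a rho p - t a).
Proof.
move=> oU mG sr sT reg Up Hs sx sy xE yE a.
have al0 := alpha0 oU mG sr sT reg Up Hs.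
have [sG Gs] := mG; have [sGp uGp] := Gs p Up.
have [sT' Ts] := sT.
set A := Amx G T rho p.
have sA : A^T = A by rewrite /A /Amx linearB /= linearZ /= sGp Ts.
have xA : x p *m A = 0 := eig_ker uGp (xE p Up).
have yA : y p *m A = 0 := eig_ker uGp (yE p Up).
have sdG : forall c, (dM G c p)^T = dM G c p.
  by move=> c; apply: (dM_sym c oU Up) => q Uq; case: (Gs q Uq).
have sdT : forall c, (dM T c p)^T = dM T c p.
  by move=> c; apply: (dM_sym c oU Up) => q Uq; exact: Ts.
have K1 : forall (z : V -> V), smooth_vf_on U z -> (forall q, U q -> in_eig G T rho q (z q)) ->
   forall i, (drow z i p + z p *m Gam G i p) *m A =
     - (z p *m NT G T i p) + partial i rho p *: (z p *m G p).
  move=> z sz zE i.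
  apply: (K1alg (T := T p) (dT := dM T i p) (dG := dM G i p)) => //.
  - exact: NT_mx.
  - exact: GamG.
  - exact: eig_ker uGp (zE p Up).
  - rewrite -(dAmxE i sG sT' sr Up); exact: (F3 i oU mG sr sT sz zE Up).
have SA : symbr G x y p *m A =
   \sum_i x p 0 i *: (- (y p *m NT G T i p) + partial i rho p *: (y p *m G p)) +
   \sum_i y p 0 i *: (- (x p *m NT G T i p) + partial i rho p *: (x p *m G p)).
  rewrite /symbr !nablaV_mx mulmxDl !mulmx_suml.
  by congr (_ + _); apply: eq_bigr => i _; rewrite -scalemxAl K1.
have L : \sum_b (T p a b - rho p * G p a b) * symbr G x y p 0 b = (symbr G x y p *m A) 0 a.
  rewrite mxE; apply: eq_bigr => b _; rewrite mulrC; congr (_ * _).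
  by rewrite -sA mxE /A /Amx !mxE.
rewrite L SA rvD !entry_lemma.
have e1 : \sum_i x p 0 i * (y p *m NT G T i p) 0 a =
   C3 (fun a b c => nablaT G T a b c p) (x p) (y p) (delta_mx 0 a).
  rewrite C3_e; apply: eq_bigr => i _; rewrite mxE mulr_sumr; apply: eq_bigr => b _.
  by rewrite mxE; ring.
have e2 : \sum_i y p 0 i * (x p *m NT G T i p) 0 a =
   C3 (fun a b c => nablaT G T a b c p) (y p) (x p) (delta_mx 0 a).
  rewrite C3_e; apply: eq_bigr => i _; rewrite mxE mulr_sumr; apply: eq_bigr => b _.
  by rewrite mxE; ring.
rewrite e1 e2.
have dx : \sum_i x p 0 i * partial i rho p = \sum_i x p 0 i * t i.
  apply/eqP; rewrite -subr_eq0 -sumrB; apply/eqP; rewrite -[RHS](al0 _ (xE p Up)).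
  by apply: eq_bigr => i _; ring.
have dy : \sum_i y p 0 i * partial i rho p = \sum_i y p 0 i * t i.
  apply/eqP; rewrite -subr_eq0 -sumrB; apply/eqP; rewrite -[RHS](al0 _ (yE p Up)).
  by apply: eq_bigr => i _; ring.
rewrite dx dy.
have symNT : forall a b c, nablaT G T a b c p = nablaT G T a c b p.
  move=> i b c; have := NT_sym G (Ts p Up) (sdT i).
  by move/(congr1 (fun M : 'M[R]_n => M c b)); rewrite !mxE.
have E : C3 (fun a b c => sym3 (fun a b c => nablaT G T a b c p) a b c) (x p) (y p) (delta_mx 0 a) =
         C3 (fun a b c => sym3 (fun a b c => G p a b * t c) a b c) (x p) (y p) (delta_mx 0 a).
  by apply: S3_ext => i b c; rewrite Hs.
rewrite !C3_sym3 !C3_Gt in E.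
rewrite (C3_NT _ oU mG sr sT reg Up xA yA) (C3_NT _ oU mG sr sT reg Up yA xA) in E.
rewrite (C3_swap23 (x p) (delta_mx 0 a) (y p) symNT) (C3_swap23 (y p) (delta_mx 0 a) (x p) symNT) in E.
rewrite (bil_sym (delta_mx 0 a) (x p) sGp) (bil_sym (delta_mx 0 a) (y p) sGp) in E.
rewrite !sum_e !bil_e (bil_sym (y p) (x p) sGp) in E.
rewrite gformE.
move: E.
set C1 := C3 _ (x p) (y p) _.
set C2 := C3 _ (y p) (x p) _.
set g := (x p *m G p *m (y p)^T) 0 0.
set xG := (x p *m G p) 0 a.
set yG := (y p *m G p) 0 a.
set tx := \sum_i x p 0 i * t i.
set ty := \sum_i y p 0 i * t i.
set tx' := \sum_c x p 0 c * t c.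
set ty' := \sum_c y p 0 c * t c.
move=> E.
have E2 : (- C1 + tx * yG + (- C2 + ty * xG) - g * (partial a rho p - t a)) * 2 =
   (g * t a + xG * ty + g * t a + yG * tx + xG * ty + yG * tx) -
   (C1 + C1 + C2 + C2 + partial a rho p * g + partial a rho p * g) by rewrite /tx' /ty' in E *; ring.
apply/eqP; rewrite -subr_eq0; apply/eqP.
move: E2; rewrite -E subrr => /eqP; rewrite mulf_eq0 pnatr_eq0 orbF => /eqP //.
Qed.

End P9.

Section P10.
Variables (R : realType) (n : nat).
Local Notation V := 'rV[R]_n.

Lemma der_ginv (U : set V) (G : V -> 'M[R]_n) p a i j :
  open U -> metric_on U G -> U p ->
  derivable ((fun q => ginv G q i j) : V -> R^o) p (ecoord R a).
Proof.
move=> oU [sG Gs] Up.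
pose f := fun q => (\det (G q))^-1 * ((-1) ^+ (j + i) * \det (row' j (col' i (G q)))).
have df : derivable (f : V -> R^o) p (ecoord R a).
  apply: derivableM.
    apply: derivableV; first by have := (Gs p Up).2; rewrite unitmxE unitfE.
    apply: derivable_det => k l; exact: smx_der sG Up.
  apply: (derivableM (derivable_cst _ _ _)).
  apply: derivable_det => k l.
  under [X in derivable X]funext do rewrite !mxE.
  exact: smx_der sG Up.
apply: (near_eq_derivable _ df).
have := nbhs_U oU Up; apply: filterS => q Uq.
by rewrite /f /ginv /invmx (Gs q Uq).2 !mxE.
Qed.


Lemma dGi_rel (U : set V) (G : V -> 'M[R]_n) p a :
  open U -> metric_on U G -> U p ->
  G p *m dM (ginv G) a p + dM G a p *m ginv G p = 0.
Proof.
move=> oU mG Up; have [sG Gs] := mG.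
apply/matrixP => i j.
have E : partial a (fun q => \sum_k G q i k * ginv G q k j) p = 0.
  rewrite /partial (@near_eq_derive _ _ _ _ (cst ((1%:M : 'M[R]_n) i j : R^o))).
    exact: derive_cst.
  have := nbhs_U oU Up; apply: filterS => q Uq.
  by rewrite /ginv -(mulmxV (Gs q Uq).2) mxE.
rewrite [RHS]mxE -[RHS]E /partial.
rewrite (dsumprod (f := fun k q => G q i k) (g := fun k q => ginv G q k j)).
- rewrite mxE -!/(mulmx _ _) !mxE -big_split /=; apply: eq_bigr => k _; rewrite !mxE /partial; ring.
- by move=> k; exact: smx_der sG Up.
- by move=> k; exact: der_ginv oU mG Up.
Qed.

Lemma dtrace (U : set V) (G T : V -> 'M[R]_n) p c :
  open U -> metric_on U G -> symmetric_field_on U T -> U p ->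
  (forall q, U q -> gtrace G T q = 0) ->
  \sum_a \sum_b (ginv G p a b * dM T c p a b + T p a b * dM (ginv G) c p a b) = 0.
Proof.
move=> oU mG [sT Ts] Up tr0; have [sG Gs] := mG.
have E : partial c (fun q => \sum_a \sum_b ginv G q a b * T q a b) p = 0.
  rewrite /partial (@near_eq_derive _ _ _ _ (cst (0 : R^o))); first exact: derive_cst.
  by have := nbhs_U oU Up; apply: filterS => q Uq; rewrite -/(gtrace G T q) tr0.
rewrite -[RHS]E /partial.
have -> : ((fun q => \sum_a \sum_b ginv G q a b * T q a b) : V -> R^o) =
   \sum_a ((fun q => \sum_b ginv G q a b * T q a b) : V -> R^o) by rewrite fct_sumE.
rewrite derive_sum; last first.
  move=> a; apply: derivable_bigsum => b _; apply: derivableM.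
    exact: der_ginv oU mG Up.
  exact: smx_der sT Up.
apply: eq_bigr => a _.
rewrite (dsumprod (f := fun b q => ginv G q a b) (g := fun b q => T q a b)).
- by apply: eq_bigr => b _; rewrite !mxE.
- by move=> b; exact: der_ginv oU mG Up.
- by move=> b; exact: smx_der sT Up.
Qed.


Lemma frob (X Y : 'M[R]_n) : \sum_a \sum_b X a b * Y a b = \tr (X *m Y^T).
Proof.
rewrite /mxtrace; apply: eq_bigr => a _; rewrite mxE; apply: eq_bigr => b _.
by rewrite !mxE.
Qed.

Lemma Qzero (U : set V) (G T : V -> 'M[R]_n) p c :
  open U -> metric_on U G -> symmetric_field_on U T -> U p ->
  (forall q, U q -> gtrace G T q = 0) ->
  \sum_a \sum_b ginv G p a b * nablaT G T c a b p = 0.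
Proof.
move=> oU mG sT Up tr0.
have [sG Gs] := mG; have [sGp uGp] := Gs p Up; have [sT' Ts] := sT.
have sdG : forall c, (dM G c p)^T = dM G c p.
  by move=> d; apply: (dM_sym d oU Up) => q Uq; case: (Gs q Uq).
have sdT : forall c, (dM T c p)^T = dM T c p.
  by move=> d; apply: (dM_sym d oU Up) => q Uq; exact: Ts.
have sGi : (ginv G p)^T = ginv G p by rewrite /ginv trmx_inv sGp.
set Gi := ginv G p.
have D := dtrace c oU mG sT Up tr0.
rewrite (eq_bigr _ (fun a _ => big_split _ _ _ _ _)) /= big_split /= !frob in D.
rewrite -/Gi sdT in D.
have dGi : dM (ginv G) c p = - (Gi *m dM G c p *m Gi).
  have R1 := dGi_rel c oU mG Up.
  have : Gi *m (G p *m dM (ginv G) c p + dM G c p *m Gi) = 0 by rewrite R1 mulmx0.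
  rewrite mulmxDr mulmxA /Gi mulVmx // mul1mx => /eqP; rewrite addr_eq0 => /eqP ->.
  by rewrite mulmxA.
have NTm : (\sum_a \sum_b Gi a b * nablaT G T c a b p) = \tr (Gi *m (NT G T c p)^T).
  by rewrite -frob; apply: eq_bigr => a _; apply: eq_bigr => b _; rewrite mxE.
rewrite NTm NT_sym ?sdT ?Ts // NT_mx.
rewrite dGi linearN /= !trmx_mul sGi sdG mulmxN linearN /= in D.
rewrite -/Gi in D.
have e1 : \tr (Gi *m dM T c p) = \tr (T p *m (Gi *m (dM G c p *m Gi))).
  by apply/eqP; rewrite -subr_eq0 D.
rewrite -(GamG sGp uGp (sdG c)) trmx_mul sGp in e1.
set Ga := Gam G c p.
have t1 : \tr (T p *m (Gi *m (Ga *m G p *m Gi))) = \tr (Gi *m (Ga *m T p)).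
  rewrite -(mulmxA Ga) /Gi mulmxV // mulmx1 mxtrace_mulC mulmxA //.
have t2 : \tr (T p *m (Gi *m (G p *m Ga^T *m Gi))) = \tr (Gi *m (T p *m Ga^T)).
  rewrite -/Gi !mulmxA -(mulmxA (T p) Gi (G p)) /Gi mulVmx // mulmx1 -/Gi.
  by rewrite mxtrace_mulC mulmxA.
rewrite !mulmxBr !linearB /= e1 mulmxDl mulmxDr mulmxDr linearD /= t1 t2.
by rewrite addrAC addrK subrr.
Qed.


End P10.

Section P11.
Variables (R : realType) (n : nat).
Local Notation V := 'rV[R]_n.

Definition P2 (f : 'I_n -> 'I_n -> R) : R := \sum_a \sum_b f a b.

Lemma P2_ext f g : (forall a b, f a b = g a b) -> P2 f = P2 g.
Proof. by move=> e; apply: eq_bigr => a _; apply: eq_bigr => b _. Qed.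

Lemma P2_add f g : P2 (fun a b => f a b + g a b) = P2 f + P2 g.
Proof. by rewrite /P2 -big_split; apply: eq_bigr => a _; rewrite -big_split. Qed.

Lemma P2_swap f : P2 f = P2 (fun a b => f b a).
Proof. by rewrite /P2 exchange_big. Qed.

Lemma msym3 (M : 'M[R]_n) (F : 'I_n -> 'I_n -> 'I_n -> R) c : M^T = M ->
  P2 (fun a b => M a b * sym3 F a b c) =
  2 * (P2 (fun a b => M a b * F a b c) + P2 (fun a b => M a b * F a c b)
       + P2 (fun a b => M a b * F c a b)).
Proof.
move=> sM.
have sM' : forall a b, M b a = M a b by move=> a b; rewrite -{1}sM mxE.
rewrite /sym3 (P2_ext (g := fun a b =>
  M a b * F a b c + M a b * F a c b + M a b * F b a c + M a b * F b c a +
  M a b * F c a b + M a b * F c b a)); last by move=> a b; ring.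
rewrite !P2_add.
rewrite [P2 (fun a b => M a b * F b a c)]P2_swap [P2 (fun a b => M a b * F b c a)]P2_swap.
rewrite [P2 (fun a b => M a b * F c b a)]P2_swap.
rewrite (P2_ext (f := fun a b => M b a * F a b c) (g := fun a b => M a b * F a b c)); last first.
  by move=> a b; rewrite sM'.
rewrite (P2_ext (f := fun a b => M b a * F a c b) (g := fun a b => M a b * F a c b)); last first.
  by move=> a b; rewrite sM'.
rewrite (P2_ext (f := fun a b => M b a * F c a b) (g := fun a b => M a b * F c a b)); last first.
  by move=> a b; rewrite sM'.
ring.
Qed.


Lemma t_formula (U : set V) (G T : V -> 'M[R]_n) p (t : 'I_n -> R) :
  open U -> metric_on U G -> symmetric_field_on U T -> U p ->
  (forall q, U q -> gtrace G T q = 0) ->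
  (forall a b c, sym3 (fun a b c => nablaT G T a b c p) a b c =
                 sym3 (fun a b c => G p a b * t c) a b c) ->
  forall c, t c = 2 / (n%:R + 2) * divT G T c p.
Proof.
move=> oU mG sT Up tr0 Hs c.
have [sG Gs] := mG; have [sGp uGp] := Gs p Up; have [sT' Ts] := sT.
have sdT : forall c, (dM T c p)^T = dM T c p.
  by move=> d; apply: (dM_sym d oU Up) => q Uq; exact: Ts.
have sGi : (ginv G p)^T = ginv G p by rewrite /ginv trmx_inv sGp.
have symNT : forall a b c, nablaT G T a b c p = nablaT G T a c b p.
  move=> i b d; have := NT_sym G (Ts p Up) (sdT i).
  by move/(congr1 (fun M : 'M[R]_n => M d b)); rewrite !mxE.
have E : P2 (fun a b => ginv G p a b * sym3 (fun a b c => nablaT G T a b c p) a b c) =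
         P2 (fun a b => ginv G p a b * sym3 (fun a b c => G p a b * t c) a b c).
  by apply: P2_ext => a b; rewrite Hs.
rewrite !msym3 // in E.
have X1 : P2 (fun a b => ginv G p a b * nablaT G T a b c p) = divT G T c p.
  rewrite P2_swap /divT; apply: eq_bigr => a _; apply: eq_bigr => b _.
  by rewrite -{1}sGi mxE.
have X2 : P2 (fun a b => ginv G p a b * nablaT G T a c b p) = divT G T c p.
  by rewrite -X1; apply: P2_ext => a b; rewrite symNT.
have X3 : P2 (fun a b => ginv G p a b * nablaT G T c a b p) = 0.
  exact: Qzero oU mG sT Up tr0.
have Y1 : P2 (fun a b => ginv G p a b * (G p a b * t c)) = n%:R * t c.
  have -> : n%:R = \tr (ginv G p *m (G p)^T) by rewrite sGp /ginv mulVmx // mxtrace1.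
  rewrite -frob /P2 mulr_suml; apply: eq_bigr => a _; rewrite mulr_suml.
  by apply: eq_bigr => b _; ring.
have Y2 : P2 (fun a b => ginv G p a b * (G p a c * t b)) = t c.
  rewrite P2_swap /P2 -(sum_delta t c); apply: eq_bigr => b _.
  rewrite -(mulVmx uGp) -/(ginv G p) mxE mulr_sumr; apply: eq_bigr => a _.
  by rewrite -{2}sGi mxE; ring.
have Y3 : P2 (fun a b => ginv G p a b * (G p c a * t b)) = t c.
  rewrite P2_swap /P2 -(sum_delta t c); apply: eq_bigr => b _.
  have -> : (1%:M : 'M[R]_n) b c = (1%:M : 'M[R]_n) c b by rewrite !mxE eq_sym.
  rewrite -(mulmxV uGp) -/(ginv G p) mxE mulr_sumr; apply: eq_bigr => a _.
  ring.
rewrite X1 X2 X3 Y1 Y2 Y3 in E.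
have n2 : n%:R + 2 != 0 :> R.
  by rewrite -(natrD R n 2) pnatr_eq0 addn2.
have H : t c * (n%:R + 2) = 2 * divT G T c p.
  have E2 : (t c * (n%:R + 2) - 2 * divT G T c p) * 2 =
    2 * (n%:R * t c + t c + t c) - 2 * (divT G T c p + divT G T c p + 0) by ring.
  by move: E2; rewrite -E subrr => /eqP; rewrite mulf_eq0 pnatr_eq0 orbF subr_eq0 => /eqP.
apply: (mulIf n2); rewrite H; field.
exact: n2.
Qed.

End P11.

Unset Implicit Arguments.

Theorem lemma4 (R : realType) (n : nat) (U : set 'rV[R]_n)
  (G T : 'rV[R]_n -> 'M[R]_n) (rho : 'rV[R]_n -> R) :
  open U -> metric_on U G -> smooth_on U rho ->
  regular_eigenspace_on U G T rho ->
  (killing_on U G T ->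
     (forall x y : 'rV[R]_n -> 'rV[R]_n,
        smooth_vf_on U x -> smooth_vf_on U y ->
        (forall q, U q -> in_eig G T rho q (x q)) ->
        (forall q, U q -> in_eig G T rho q (y q)) ->
        forall p, U p -> forall a : 'I_n,
          \sum_(b < n) (T p a b - rho p * G p a b) * symbr G x y p 0 b =
          gform G p (x p) (y p) * (partial a rho p - 0)) /\
     (forall p, U p -> forall v, in_eig G T rho p v ->
        \sum_(a < n) v 0 a * partial a rho p = 0)) /\
  (conformal_on U G T ->
     (forall x y : 'rV[R]_n -> 'rV[R]_n,
        smooth_vf_on U x -> smooth_vf_on U y ->
        (forall q, U q -> in_eig G T rho q (x q)) ->
        (forall q, U q -> in_eig G T rho q (y q)) ->
        forall p, U p -> forall a : 'I_n,
          \sum_(b < n) (T p a b - rho p * G p a b) * symbr G x y p 0 b =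
          gform G p (x p) (y p) *
            (partial a rho p - 2 / (n%:R + 2) * divT G T a p)) /\
     (forall p, U p -> forall v, in_eig G T rho p v ->
        \sum_(a < n) v 0 a *
          (2 * divT G T a p - (n%:R + 2) * partial a rho p) = 0)).
Proof.
move=> oU mG sr reg; split.
- move=> [sT Hk].
  have Hs : forall p, U p -> forall a b c,
      sym3 (fun a b c => nablaT G T a b c p) a b c =
      sym3 (fun a b c => G p a b * (fun _ : 'I_n => 0 : R) c) a b c.
    by move=> p Up a b c; rewrite /sym3 !mulr0 !addr0; exact: Hk p Up a b c.
  split.
  + move=> x y sx sy xE yE p Up a.
    exact: (part1core oU mG sr sT reg Up (Hs p Up) sx sy xE yE a).
  + move=> p Up v vE.
    have := alpha0 oU mG sr sT reg Up (Hs p Up) vE.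
    by under eq_bigr do rewrite subr0.
- move=> [sT [tr0 [t Ht]]].
  have tf : forall p, U p -> forall c, t c p = 2 / (n%:R + 2) * divT G T c p.
    move=> p Up c; exact: (t_formula (t := fun c => t c p) oU mG sT Up tr0 (Ht p Up) c).
  split.
  + move=> x y sx sy xE yE p Up a.
    rewrite -(tf p Up a).
    exact: (part1core (t := fun c => t c p) oU mG sr sT reg Up (Ht p Up) sx sy xE yE a).
  + move=> p Up v vE.
    have := alpha0 (t := fun c => t c p) oU mG sr sT reg Up (Ht p Up) vE.
    move=> H; transitivity (- (n%:R + 2) * \sum_a v 0 a * (partial a rho p - t a p)); last first.
      by rewrite H mulr0.
    rewrite mulr_sumr; apply: eq_bigr => a _; rewrite (tf p Up a).
    have n2 : n%:R + 2 != 0 :> R by rewrite -(natrD R n 2) pnatr_eq0 addn2.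
    by field.
Qed.
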